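(* Let $\alpha\approx1.46557$ be the real root of $x^3-x^2-1$ between $1$ and $2$. Every graph of pathwidth at most $1$ and order $n$ has at most $\alpha^n$ 1-minimal perfect dominating sets. Moreover, the number of 1-minimal perfect dominating sets of the path on $n$ vertices is $\Theta(\alpha^n)$.
   Context: A perfect dominating set of $G=(V,E)$ is a set $D\subseteq V$ such that every vertex of $V\setminus D$ has exactly one neighbour in $D$ (no condition on vertices of $D$); i.e. an $(\mathbb{N},\{1\})$-dominating set. It is 1-minimal if for every $x\in D$, $D\setminus\{x\}$ is not a perfect dominating set. Order = number of vertices; pathwidth is the standard notion. *)

(* Defs.v *)
From mathcomp Require Import all_boot.
Set Implicit Arguments. Unset Strict Implicit. Unset Printing Implicit Defensive.

(* A finite simple graph on vertex type T is a symmetric irreflexive relation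
   e : rel T; the order of the graph is #|T|. *)

Definition perfect_dom (T : finType) (e : rel T) (D : {set T}) : bool :=
  [forall v, (v \notin D) ==> (#|[set u in D | e v u]| == 1)].

Definition one_minimal_pds (T : finType) (e : rel T) (D : {set T}) : bool :=
  perfect_dom e D && [forall x in D, ~~ perfect_dom e (D :\ x)].

Definition num_1min_pds (T : finType) (e : rel T) : nat :=
  #|[set D : {set T} | one_minimal_pds e D]|.

Definition path_decomposition (T : finType) (e : rel T) (bags : seq {set T}) : Prop :=
  (forall v : T, exists2 X, X \in bags & v \in X) /\
  (forall u v : T, e u v -> exists2 X, X \in bags & (u \in X) && (v \in X)) /\
  (forall (v : T) (i j k : nat), i <= j <= k ->
      v \in nth set0 bags i -> v \in nth set0 bags k -> v \in nth set0 bags j).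

Definition pathwidth_le1 (T : finType) (e : rel T) : Prop :=
  exists bags : seq {set T}, path_decomposition e bags /\ all (fun X : {set T} => #|X| <= 2) bags.

Definition path_rel (n : nat) : rel 'I_n :=
  fun i j => (i.+1 == j :> nat) || (j.+1 == i :> nat).
Arguments path_rel n : clear implicits.

(* Main.v *)
Require Import Defs.
From mathcomp Require Import all_boot.
From mathcomp Require Import zify.
From Stdlib Require Import Lia.
Set Implicit Arguments. Unset Strict Implicit. Unset Printing Implicit Defensive.

Lemma card_split (X : finType) (P c : pred X) :
  #|[set D | P D]| = #|[set D | P D && c D]| + #|[set D | P D && ~~ c D]|.
Proof.
rewrite -(cardsID [set D | c D] [set D | P D]); congr addn;
  apply: eq_card => D; by rewrite !inE andbC.
Qed.

Lemma inj_le (X Y : finType) (P : pred X) (Q : pred Y) (g : X -> Y) :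
  (forall D, P D -> Q (g D)) -> (forall D1 D2, P D1 -> P D2 -> g D1 = g D2 -> D1 = D2) ->
  #|[set D | P D]| <= #|[set D | Q D]|.
Proof.
move=> hQ hi; rewrite -(card_in_imset (f:=g)); last first.
  by move=> x y; rewrite !inE => hx hy; apply: hi.
apply: subset_leq_card; apply/subsetP => y /imsetP [x]; rewrite !inE => hx ->.
exact: hQ.
Qed.

Lemma card1I (X : finType) (u : X) (D : {set X}) : #|[set u] :&: D| = (u \in D).
Proof.
case: (boolP (u \in D)) => h.
  by rewrite (setIidPl _) ?cards1 // sub1set.
apply/eqP; rewrite cards_eq0; apply/eqP/setP => y; rewrite !inE.
by case: (y =P u) => // ->; rewrite (negbTE h).
Qed.

Section Comb.
Variables (T : finType) (e : rel T).
Hypotheses (esym : symmetric e) (eirr : irreflexive e).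

Definition nbr (S : {set T}) x := [set y in S | e x y].
Definition valid (S D : {set T}) := (D \subset S) && [forall x in S,
  if x \in D then (#|nbr S x| == 1) ==> (nbr S x :&: D == set0) else #|nbr S x :&: D| == 1].
Definition fcount S := #|[set D | valid S D]|.

Lemma inN (S : {set T}) x y : (y \in nbr S x) = (y \in S) && e x y.
Proof. by rewrite inE. Qed.

Lemma NsD (S : {set T}) v x : nbr (S :\ v) x = nbr S x :\ v.
Proof. by apply/setP => y; rewrite !inE; case: (y == v); rewrite ?andbF. Qed.

Lemma validS (S D : {set T}) : valid S D -> D \subset S.
Proof. by case/andP. Qed.
Lemma validO (S D : {set T}) x : valid S D -> x \in S -> x \notin D -> #|nbr S x :&: D| = 1.
Proof.
case/andP => _ /forall_inP h xS xD; move: (h x xS); rewrite (negbTE xD).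
by move/eqP.
Qed.
Lemma validI (S D : {set T}) x : valid S D -> x \in D -> #|nbr S x| = 1 -> nbr S x :&: D = set0.
Proof.
case/andP => sD /forall_inP h xD n1; have xS : x \in S by apply: (subsetP sD).
by move: (h x xS); rewrite xD n1 eqxx /= => /eqP.
Qed.
Lemma validE (S D : {set T}) : D \subset S ->
  (forall x, x \in S -> x \notin D -> #|nbr S x :&: D| = 1) ->
  (forall x, x \in D -> #|nbr S x| = 1 -> nbr S x :&: D = set0) -> valid S D.
Proof.
move=> sD hO hI; apply/andP; split => //; apply/forall_inP => x xS.
case: (boolP (x \in D)) => xD.
  by apply/implyP => /eqP n1; rewrite hI.
by rewrite hO.
Qed.

Lemma esymE x y : e x y = e y x.
Proof. exact: esym. Qed.

Lemma neq_of_e x y : e x y -> x != y.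
Proof. by apply: contraTneq => ->; rewrite eirr. Qed.

Lemma two_elems (A : {set T}) p : 1 < #|A| -> exists2 x, x \in A & x != p.
Proof.
move=> h; case: (boolP [exists x in A, x != p]).
  by case/exists_inP => x; exists x.
move/exists_inPn => h2; have : A \subset [set p].
  by apply/subsetP => x xA; move: (h2 x xA); rewrite negbK inE.
by move/subset_leq_card; rewrite cards1 => h3; move: (leq_ltn_trans h3 h); rewrite ltnn.
Qed.

End Comb.

Section PW.
Variables (T : finType) (e : rel T).
Hypotheses (esym : symmetric e) (eirr : irreflexive e).
Variable bags : seq {set T}.
Hypothesis pd : path_decomposition e bags.
Hypothesis small : all (fun X : {set T} => #|X| <= 2) bags.

Let B j := nth set0 bags j.

Lemma Bsize j x : x \in B j -> j < size bags.
Proof.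
rewrite /B; case: (ltnP j (size bags)) => // h.
by rewrite nth_default ?inE.
Qed.

Lemma three a b c j : a \in B j -> b \in B j -> c \in B j -> a != b -> b != c -> a != c -> False.
Proof.
move=> ha hb hc ab bc ac.
have hj := Bsize ha.
have h2 : #|B j| <= 2 by apply: (allP small); apply: mem_nth.
have : a |: (b |: [set c]) \subset B j.
  by apply/subsetP => x; rewrite !inE => /or3P [] /eqP ->.
move/subset_leq_card; rewrite !cardsU1 cards1 !inE negb_or ab ac bc /= => h3.
by move: (leq_trans h3 h2).
Qed.

Lemma cover x : exists j, x \in B j.
Proof.
case: pd => [hc _]; case: (hc x) => X hX xX; exists (index X bags).
by rewrite /B nth_index.
Qed.

Lemma edge x y : e x y -> exists j, (x \in B j) && (y \in B j).
Proof.
case: pd => [_ [he _]] exy; case: (he x y exy) => X hX xX; exists (index X bags).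
by rewrite /B nth_index.
Qed.

Lemma contig x i j k : i <= j <= k -> x \in B i -> x \in B k -> x \in B j.
Proof. by case: pd => [_ [_ h]]; apply: h. Qed.

Lemma last_ex x : exists k, x \in B k /\ forall j, x \in B j -> j <= k.
Proof.
have ex : exists i, (fun j => x \in B j) i by apply: cover.
have ub : forall i, (fun j => x \in B j) i -> i <= size bags.
  by move=> i /Bsize /ltnW.
case: (ex_maxnP ex ub) => k hk hm; exists k; split => //.
Qed.

Lemma first_ex x : exists a, x \in B a /\ forall j, x \in B j -> a <= j.
Proof.
have ex : exists i, (fun j => x \in B j) i by apply: cover.
case: (ex_minnP ex) => k hk hm; exists k; split => //.
Qed.

Lemma side p a b w : (forall j, p \in B j -> a <= j <= b) -> p \in B a -> p \in B b ->
  e p w -> (exists x, e w x /\ x != p) -> (w \in B a) || (w \in B b).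
Proof.
move=> hint pa pb epw [x [ewx xp]].
case: (edge epw) => j1 /andP [pj1 wj1].
case: (edge ewx) => j2 /andP [wj2 xj2].
have pw : p != w by apply: (neq_of_e eirr).
have wx : w != x by apply: (neq_of_e eirr).
case/andP: (hint _ pj1) => aj1 j1b.
case: (ltnP j2 a) => h1.
  apply/orP; left; apply: (contig (i:=j2) (k:=j1)) => //.
  by rewrite (ltnW h1) aj1.
case: (ltnP b j2) => h2.
  apply/orP; right; apply: (contig (i:=j1) (k:=j2)) => //.
  by rewrite j1b (ltnW h2).
exfalso; have pj2 : p \in B j2 by apply: (contig (i:=a) (k:=b)) => //; rewrite h1 h2.
by apply: (three pj2 wj2 xj2) => //; rewrite eq_sym.
Qed.

Lemma deg2 (S : {set T}) p w1 w2 w3 : w1 \in nbr e S p -> w2 \in nbr e S p -> w3 \in nbr e S p ->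
  1 < #|nbr e S w1| -> 1 < #|nbr e S w2| -> 1 < #|nbr e S w3| ->
  w1 != w2 -> w2 != w3 -> w1 != w3 -> False.
Proof.
have getx : forall w, 1 < #|nbr e S w| -> exists x, e w x /\ x != p.
  move=> w /(two_elems p) [x]; rewrite inN => /andP [_ h] xp; by exists x.
rewrite !inN => /andP [_ e1] /andP [_ e2] /andP [_ e3] n1 n2 n3 d12 d23 d13.
case: (first_ex p) => a [pa ha]; case: (last_ex p) => b [pb hb].
have hint : forall j, p \in B j -> a <= j <= b by move=> j pj; rewrite ha ?hb.
have s1 := side hint pa pb e1 (getx _ n1).
have s2 := side hint pa pb e2 (getx _ n2).
have s3 := side hint pa pb e3 (getx _ n3).
have p1 : p != w1 by apply: (neq_of_e eirr).
have p2 : p != w2 by apply: (neq_of_e eirr).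
have p3 : p != w3 by apply: (neq_of_e eirr).
case/orP: s1 => h1; case/orP: s2 => h2; case/orP: s3 => h3;
  solve [ exact: (three pa h1 h2) | exact: (three pa h1 h3) | exact: (three pa h2 h3)
        | exact: (three pb h1 h2) | exact: (three pb h1 h3) | exact: (three pb h2 h3) ].
Qed.


Lemma structure (S : {set T}) : S != set0 -> exists2 v, v \in S &
  (nbr e S v = set0 \/ exists u, nbr e S v = [set u] /\
     (forall w1 w2, w1 \in nbr e S u -> w2 \in nbr e S u ->
        1 < #|nbr e S w1| -> 1 < #|nbr e S w2| -> w1 = w2)).
Proof.
case/set0Pn => x0 x0S.
pose P k := [exists x in S, (x \in B k) &&
   [forall j : 'I_(size bags), (x \in B j) ==> (j <= k)]].
have lastb : forall x, exists k, (x \in B k) && [forall j : 'I_(size bags), (x \in B j) ==> (j <= k)].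
  move=> x; case: (last_ex x) => k [xk hk]; exists k; rewrite xk /=.
  by apply/forallP => j; apply/implyP => /hk.
have exP : exists k, P k.
  case: (lastb x0) => k hk; exists k; apply/exists_inP; by exists x0.
case: (ex_minnP exP) => i /exists_inP [v vS /andP [vi /forallP vlast]] imin.
have vl : forall j, v \in B j -> j <= i.
  move=> j vj; have jl := Bsize vj; exact: (implyP (vlast (Ordinal jl)) vj).
have K : forall x j, x \in S -> j <= i -> x \in B j -> x \in B i.
  move=> x j xS ji xj; case: (lastb x) => k /andP [xk hk].
  have ik : i <= k by apply: imin; apply/exists_inP; exists x => //; rewrite xk.
  by apply: (contig (i:=j) (k:=k)) => //; rewrite ji ik.
have NvB : forall y, y \in nbr e S v -> y \in B i.
  move=> y; rewrite inN => /andP [yS evy].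
  case: (edge evy) => j /andP [vj yj]; exact: (K _ _ yS (vl _ vj) yj).
exists v => //.
case: (set_0Vmem (nbr e S v)) => [-> | [u uN]]; first by left.
right; exists u.
have NvE : nbr e S v = [set u].
  apply/setP => y; rewrite in_set1; apply/idP/idP; last by move/eqP ->.
  move=> yN; apply/negPn/negP => yu.
  have vu : v != u by apply: (neq_of_e eirr); move: uN; rewrite inN => /andP [_ ->].
  have vy : v != y by apply: (neq_of_e eirr); move: yN; rewrite inN => /andP [_ ->].
  by apply: (three vi (NvB _ uN) (NvB _ yN)) => //; rewrite eq_sym.
split => // w1 w2 w1N w2N n1 n2; apply/eqP/negPn/negP => w12.
have ui := NvB _ uN.
have uS : u \in S by move: uN; rewrite inN => /andP [->].
have evu : e v u by move: uN; rewrite inN => /andP [_ ->].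
case: (last_ex u) => k [uk hk].
have ik : i <= k by apply: hk.
have wk : forall w, w \in nbr e S u -> 1 < #|nbr e S w| -> w \in B k.
  move=> w wN nw; move: (wN); rewrite inN => /andP [wS euw].
  have wv : w != v.
    apply/eqP => wv; move: nw; by rewrite wv NvE cards1.
  case: (two_elems u nw) => x; rewrite inN => /andP [xS ewx] xu.
  case: (edge euw) => j1 /andP [uj1 wj1]; have j1k := hk _ uj1.
  case: (edge ewx) => j2 /andP [wj2 xj2].
  have uw : u != w by apply: (neq_of_e eirr).
  have wx : w != x by apply: (neq_of_e eirr).
  case: (leqP j2 i) => h1.
    exfalso; have wi := K _ _ wS h1 wj2.
    by apply: (three vi ui wi) => //; [apply: (neq_of_e eirr) | rewrite eq_sym].
  case: (leqP j2 k) => h2.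
    exfalso; have uj2 : u \in B j2 by apply: (contig (i:=i) (k:=k)) => //; rewrite (ltnW h1) h2.
    by apply: (three uj2 wj2 xj2) => //; rewrite eq_sym.
  by apply: (contig (i:=j1) (k:=j2)) => //; rewrite j1k (ltnW h2).
have u1 : u != w1 by apply: (neq_of_e eirr); move: w1N; rewrite inN => /andP [_ ->].
have u2 : u != w2 by apply: (neq_of_e eirr); move: w2N; rewrite inN => /andP [_ ->].
exact: (three uk (wk _ w1N n1) (wk _ w2N n2)).
Qed.

End PW.

Section Help.
Variable X : finType.
Implicit Types (A D : {set X}) (v : X).
Lemma setD1_id A v : v \notin A -> A :\ v = A.
Proof. move=> h; apply/setP => y; rewrite !inE; case: (eqVneq y v) => [->|yv]; [by rewrite ?eqxx ?(negbTE h) ?andbF | by rewrite ?yv]. Qed.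
Lemma setD1I A D v : v \notin D -> (A :\ v) :&: D = A :&: D.
Proof. move=> h; apply/setP => y; rewrite !inE; case: (eqVneq y v) => [->|yv]; [by rewrite ?eqxx ?(negbTE h) ?andbF | by rewrite ?yv]. Qed.
Lemma setID1 A D v : v \notin A -> A :&: (D :\ v) = A :&: D.
Proof. move=> h; apply/setP => y; rewrite !inE; case: (eqVneq y v) => [->|yv]; [by rewrite ?eqxx ?(negbTE h) ?andbF | by rewrite ?yv]. Qed.
Lemma two_lt (a b : X) A : a \in A -> b \in A -> a != b -> 1 < #|A|.
Proof.
move=> ha hb ab; have : [set a; b] \subset A by apply/subsetP => y; rewrite !inE => /orP [] /eqP ->.
by move/subset_leq_card; rewrite cards2 ab.
Qed.
Lemma card1_eq (x : X) A : x \in A -> #|A| = 1 -> A = [set x].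
Proof.
move=> xA /eqP/cards1P [y hy]; move: xA; rewrite hy in_set1 => /eqP ->; done.
Qed.
Lemma inj_D1 v D1 D2 : v \in D1 -> v \in D2 -> D1 :\ v = D2 :\ v -> D1 = D2.
Proof. by move=> h1 h2; rewrite -{2}(setD1K h1) -{2}(setD1K h2) => ->. Qed.
End Help.

Section Count.
Variables (T : finType) (e : rel T).
Hypotheses (esy : symmetric e) (eirr : irreflexive e).
Implicit Types (S D : {set T}) (v u w x y p q r : T).
Local Notation NS := (nbr e).
Local Notation valid := (valid e).
Local Notation fcount := (fcount e).

Lemma Nsym (S : {set T}) x y : x \in S -> y \in NS S x -> x \in NS S y.
Proof. by move=> xS; rewrite !inN => /andP [_ h]; rewrite xS esy. Qed.

Lemma case0 S v : v \in S -> NS S v = set0 -> fcount S <= fcount (S :\ v).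
Proof.
move=> vS Nv; apply: (inj_le (g := fun D => D :\ v)).
  move=> D hD.
  have vD : v \in D.
    apply/negPn/negP => vD; move: (validO hD vS vD); by rewrite Nv set0I cards0.
  have vNx : forall x, x \in S -> v \notin NS S x.
    move=> x xS; apply/negP => /(Nsym xS); by rewrite Nv inE.
  apply: validE.
  - by apply: setSD; apply: validS hD.
  - move=> x; rewrite !inE => /andP [xv xS]; rewrite xv /= => xD.
    by rewrite NsD setD1_id ?vNx // setID1 ?vNx // (validO hD).
  - move=> x; rewrite !inE => /andP [xv xD].
    have xS : x \in S by apply: (subsetP (validS hD)).
    rewrite NsD setD1_id ?vNx // => h.
    by rewrite setID1 ?vNx // (validI hD).
move=> D1 D2 h1 h2; apply: inj_D1.
  apply/negPn/negP => vD; move: (validO h1 vS vD); by rewrite Nv set0I cards0.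
apply/negPn/negP => vD; move: (validO h2 vS vD); by rewrite Nv set0I cards0.
Qed.


Lemma notin_N S v u x : x \in S -> NS S v = [set u] -> x != u -> v \notin NS S x.
Proof.
move=> xS Nv xu; apply/negP => /(Nsym xS); rewrite Nv in_set1; by rewrite (negbTE xu).
Qed.

Lemma set1I0 w D : w \notin D -> [set w] :&: D = set0.
Proof. by move=> h; apply/eqP; rewrite -cards_eq0 card1I (negbTE h). Qed.

Lemma case1a S v u w : v \in S -> NS S v = [set u] -> w \in NS S u -> w != v ->
  #|NS S w| = 1 -> fcount S <= fcount (S :\ v).
Proof.
move=> vS Nv wN wv w1.
have uN : u \in NS S v by rewrite Nv set11.
have uS : u \in S by move: uN; rewrite inN => /andP [->].
have wS : w \in S by move: wN; rewrite inN => /andP [->].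
have vNu : v \in NS S u := Nsym vS uN.
have Nw : NS S w = [set u] := card1_eq (Nsym uS wN) w1.
apply: (inj_le (g := id)); last by move=> D1 D2 _ _.
move=> D hD.
have uD : u \in D.
  apply/negPn/negP => uD.
  have vD : v \in D.
    apply/negPn/negP => vD; move: (validO hD vS vD); by rewrite Nv card1I (negbTE uD).
  have wD : w \in D.
    apply/negPn/negP => wD; move: (validO hD wS wD); by rewrite Nw card1I (negbTE uD).
  have h1 : v \in NS S u :&: D by rewrite in_setI vNu vD.
  have h2 : w \in NS S u :&: D by rewrite in_setI wN wD.
  have := two_lt h1 h2; rewrite (validO hD uS uD) eq_sym wv; by move/(_ isT).
have vD : v \notin D.
  have n1 : #|NS S v| = 1 by rewrite Nv cards1.
  apply/negP => vD; move: (validI hD vD n1).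
  by rewrite Nv => /setP /(_ u); rewrite !inE eqxx uD.
have wD : w \notin D.
  apply/negP => wD; move: (validI hD wD w1).
  by rewrite Nw => /setP /(_ u); rewrite !inE eqxx uD.
apply: validE.
- apply/subsetP => x xD; rewrite !inE (subsetP (validS hD) _ xD) andbT.
  by apply/negP => /eqP xv; move: xD; rewrite xv (negbTE vD).
- move=> x; rewrite !inE => /andP [_ xS] xD; by rewrite NsD setD1I // (validO hD).
- move=> x xD; have xS : x \in S by apply: (subsetP (validS hD)).
  rewrite NsD; case: (eqVneq x u) => [->|xu] h1.
    have wNu : w \in NS S u :\ v by rewrite in_setD1 wv wN.
    by rewrite (card1_eq wNu h1) set1I0.
  move: h1; rewrite setD1_id ?(notin_N xS Nv xu) // => h1.
  exact: validI hD xD h1.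
Qed.


Lemma caseK2 S v u : v \in S -> NS S v = [set u] -> NS S u = [set v] ->
  fcount S <= 2 * fcount (S :\ v :\ u).
Proof.
move=> vS Nv Nu.
have uN : u \in NS S v by rewrite Nv set11.
have uS : u \in S by move: uN; rewrite inN => /andP [->].
have far : forall x, x \in S :\ v :\ u -> NS (S :\ v :\ u) x = NS S x.
  move=> x; rewrite !inE => /and3P [xu xv xS].
  by rewrite !NsD (setD1_id (notin_N xS Nv xu)) (setD1_id (notin_N xS Nu xv)).
have inS2 : forall x, x \in S :\ v :\ u -> [/\ x != u, x != v & x \in S].
  by move=> x; rewrite !inE => /and3P.
rewrite /fcount (card_split _ (fun D => u \in D)) mul2n -addnn leq_add //.
  apply: (inj_le (g := fun D => D :\ u)); last first.
    by move=> D1 D2 /andP [_ h1] /andP [_ h2]; apply: inj_D1.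
  move=> D /andP [hD uD].
  have vD : v \notin D.
    have n1 : #|NS S v| = 1 by rewrite Nv cards1.
    apply/negP => vD; move: (validI hD vD n1).
    by rewrite Nv => /setP /(_ u); rewrite !inE eqxx uD.
  apply: validE.
  - apply/subsetP => x; rewrite !inE => /andP [xu xD]; rewrite xu (subsetP (validS hD) _ xD) andbT.
    by apply/negP => /eqP xv; move: xD; rewrite xv (negbTE vD).
  - move=> x xS2; case: (inS2 _ xS2) => xu xv xS; rewrite in_setD1 xu /= => xD.
    rewrite far // setID1 ?(validO hD) //.
    by apply: (notin_N xS Nu xv).
  - move=> x; rewrite in_setD1 => /andP [xu xD].
    have xS : x \in S by apply: (subsetP (validS hD)).
    have xv : x != v by apply/negP => /eqP xv; move: xD; rewrite xv (negbTE vD).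
    have xS2 : x \in S :\ v :\ u by rewrite !inE xu xv xS.
    rewrite far // => h1; rewrite setID1 ?(validI hD) //.
    by apply: (notin_N xS Nu xv).
apply: (inj_le (g := fun D => D :\ v)); last first.
  move=> D1 D2 /andP [h1 u1] /andP [h2 u2]; apply: inj_D1.
    apply/negPn/negP => vD; move: (validO h1 vS vD); by rewrite Nv card1I (negbTE u1).
  apply/negPn/negP => vD; move: (validO h2 vS vD); by rewrite Nv card1I (negbTE u2).
move=> D /andP [hD uD].
apply: validE.
- apply/subsetP => x; rewrite !inE => /andP [xv xD]; rewrite xv (subsetP (validS hD) _ xD) /= !andbT.
  by apply/negP => /eqP xu; move: xD; rewrite xu (negbTE uD).
- move=> x xS2; case: (inS2 _ xS2) => xu xv xS; rewrite in_setD1 xv /= => xD.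
  rewrite far // setID1 ?(validO hD) //.
  by apply: (notin_N xS Nv xu).
- move=> x; rewrite in_setD1 => /andP [xv xD].
  have xS : x \in S by apply: (subsetP (validS hD)).
  have xu : x != u by apply/negP => /eqP xu; move: xD; rewrite xu (negbTE uD).
  have xS2 : x \in S :\ v :\ u by rewrite !inE xu xv xS.
  rewrite far // => h1; rewrite setID1 ?(validI hD) //.
  by apply: (notin_N xS Nv xu).
Qed.


Lemma setI0D1 A D u : A :&: D = set0 -> A :&: (D :\ u) = set0.
Proof.
move=> h; apply/eqP; rewrite -subset0 -h; apply: setIS; exact: subD1set.
Qed.

Lemma NS2I S v u p x D : x \in S -> v \notin NS S x -> u \notin D -> p \notin D ->
  NS (S :\ v :\ u :\ p) x :&: (D :&: (S :\ v :\ u :\ p)) = NS S x :&: D.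
Proof.
move=> xS vN uD pD; apply/setP => y; rewrite !inE.
case: (eqVneq y p) => [->|yp]; first by rewrite (negbTE pD) !andbF.
case: (eqVneq y u) => [->|yu]; first by rewrite (negbTE uD) !andbF.
case: (eqVneq y v) => [->|yv].
  move: vN; rewrite inN => /negbTE ->; by rewrite !andbF.
by case: (y \in S); case: (e x y); case: (y \in D).
Qed.

Lemma case1bii S v u p : v \in S -> NS S v = [set u] -> NS S u = [set v; p] -> p != v ->
  1 < #|NS S p| ->
  (forall q1 q2, q1 \in NS S p -> q2 \in NS S p -> q1 != u -> q2 != u ->
     1 < #|NS S q1| -> 1 < #|NS S q2| -> q1 = q2) ->
  fcount S <= fcount (S :\ v) + fcount (S :\ v :\ u :\ p).
Proof.
move=> vS Nv Nu pv np hdeg.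
set S2 := S :\ v :\ u :\ p.
have uN : u \in NS S v by rewrite Nv set11.
have uS : u \in S by move: uN; rewrite inN => /andP [->].
have evu : e v u by move: uN; rewrite inN => /andP [_ ->].
have pN : p \in NS S u by rewrite Nu !inE eqxx orbT.
have pS : p \in S by move: pN; rewrite inN => /andP [->].
have eup : e u p by move: pN; rewrite inN => /andP [_ ->].
have vNu : v \in NS S u by rewrite Nu !inE eqxx.
have uNp : u \in NS S p := Nsym uS pN.
have uv : u != v by rewrite eq_sym; apply: (neq_of_e eirr).
have pu : p != u by rewrite eq_sym; apply: (neq_of_e eirr).
have vfar : forall x, x \in S -> x != u -> v \notin NS S x.
  by move=> x xS xu; apply: (notin_N xS Nv xu).
have ufar : forall x, x \in S -> x != v -> x != p -> u \notin NS S x.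
  move=> x xS xv xp; apply/negP => /(Nsym xS); rewrite Nu !inE.
  by rewrite (negbTE xv) (negbTE xp).
have inS2 : forall x, x \in S2 = [&& x != p, x != u, x != v & x \in S].
  by move=> x; rewrite !inE.
have NS2 : forall x, NS S2 x = NS S x :\ v :\ u :\ p by move=> x; rewrite !NsD.
have n1v : #|NS S v| = 1 by rewrite Nv cards1.
have hA : #|[set D | valid S D && (u \in D)]| <= fcount (S :\ v).
  have eA := card_split (fun D => valid (S :\ v) D) (fun D => u \in D).
  have eA2 := card_split (fun D => valid S D && (u \in D)) (fun D => p \in D).
  cbv beta in eA; cbv beta in eA2; rewrite /fcount eA eA2 addnC leq_add //.
  +
    apply: (inj_le (g := id)); last by move=> D1 D2 _ _.
    move=> D /andP [/andP [hD uD] pD]; rewrite uD andbT.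
    have vD : v \notin D.
      apply/negP => vD; move: (validI hD vD n1v).
      by rewrite Nv => /setP /(_ u); rewrite !inE eqxx uD.
    apply: validE.
    - apply/subsetP => x xD; rewrite !inE (subsetP (validS hD) _ xD) andbT.
      by apply/negP => /eqP xv; move: xD; rewrite xv (negbTE vD).
    - move=> x; rewrite !inE => /andP [_ xS] xD; by rewrite NsD setD1I // (validO hD).
    - move=> x xD; have xS : x \in S by apply: (subsetP (validS hD)).
      rewrite NsD; case: (eqVneq x u) => [->|xu] h1.
        have -> : NS S u :\ v = [set p].
          apply/setP => y; rewrite in_setD1 Nu !inE; case: (eqVneq y v) => [->|] //=.
          by rewrite eq_sym (negbTE pv).
        by rewrite set1I0.
      move: h1; rewrite setD1_id ?vfar // => h1.
      exact: validI hD xD h1.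
  +
    apply: (inj_le (g := fun D => D :\ u)); last first.
      by move=> D1 D2 /andP [/andP [_ h1] _] /andP [/andP [_ h2] _]; apply: inj_D1.
    move=> D /andP [/andP [hD uD] pD]; rewrite setD11 andbT.
    have vD : v \notin D.
      apply/negP => vD; move: (validI hD vD n1v).
      by rewrite Nv => /setP /(_ u); rewrite !inE eqxx uD.
    apply: validE.
    - apply/subsetP => x; rewrite !inE => /andP [xu xD]; rewrite (subsetP (validS hD) _ xD) andbT.
      by apply/negP => /eqP xv; move: xD; rewrite xv (negbTE vD).
    - move=> x; rewrite !inE => /andP [xv xS]; case: (eqVneq x u) => [->|xu] /= xD.
        have -> : NS (S :\ v) u = [set p].
          apply/setP => y; rewrite NsD in_setD1 Nu !inE; case: (eqVneq y v) => [->|] //=.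
          by rewrite eq_sym (negbTE pv).
        by rewrite card1I !inE pu pD.
      have xp : x != p by apply/negP => /eqP xp; move: xD; rewrite xp pD.
      by rewrite NsD setD1_id ?vfar // setID1 ?ufar // (validO hD).
    - move=> x; rewrite !inE => /andP [xu xD]; have xS : x \in S by apply: (subsetP (validS hD)).
      rewrite NsD setD1_id ?vfar // => h1; apply: setI0D1; exact: validI hD xD h1.
have Bfacts : forall D, valid S D -> u \notin D ->
    [/\ v \in D, p \notin D & #|NS S p :&: D| = 1].
  move=> D hD uD.
  have vD : v \in D.
    apply/negPn/negP => vD; move: (validO hD vS vD); by rewrite Nv card1I (negbTE uD).
  have pD : p \notin D.
    apply/negP => pD; have h1 : v \in NS S u :&: D by rewrite in_setI vNu vD.
    have h2 : p \in NS S u :&: D by rewrite in_setI pN pD.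
    have := two_lt h1 h2; rewrite (validO hD uS uD) eq_sym pv; by move/(_ isT).
  by split => //; apply: (validO hD pS pD).
pose bad D := [exists q, [&& q \in NS S p, q \in D, #|NS S2 q| == 1 & NS S2 q :&: D != set0]].
have qS2 : forall D q, valid S D -> u \notin D -> q \in NS S p -> q \in D -> q \in S2.
  move=> D q hD uD qN qD; case: (Bfacts D hD uD) => vD pD _.
  move: (qN); rewrite inN => /andP [qS epq].
  rewrite inS2 qS andbT; apply/and3P; split.
  - by rewrite eq_sym (neq_of_e eirr).
  - by apply/negP => /eqP qu; move: qD; rewrite qu (negbTE uD).
  - by apply/negP => /eqP qv; move: qN; rewrite qv (negbTE (vfar _ pS pu)).
have hB : #|[set D | valid S D && ~~ (u \in D)]| <= fcount S2.
  have eB := card_split (fun D => valid S2 D) (fun E => NS S p :&: E != set0).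
  have eB2 := card_split (fun D => valid S D && ~~ (u \in D)) bad.
  cbv beta in eB; cbv beta in eB2; rewrite /fcount eB eB2 addnC leq_add //.
+
  apply: (inj_le (g := fun D => D :&: S2)); last first.
    move=> D1 D2 /andP [/andP [h1 u1] _] /andP [/andP [h2 u2] _] eqE.
    case: (Bfacts D1 h1 u1) => v1 p1 _; case: (Bfacts D2 h2 u2) => v2 p2 _.
    apply/setP => y; case: (boolP (y \in S2)) => yS2.
      by move: eqE => /setP /(_ y); rewrite !in_setI yS2 !andbT.
    move: yS2; rewrite inS2; case: (eqVneq y p) => [->|yp] /=; first by rewrite (negbTE p1) (negbTE p2).
    case: (eqVneq y u) => [->|yu] /=; first by rewrite (negbTE u1) (negbTE u2).
    case: (eqVneq y v) => [->|yv] /=; first by rewrite v1 v2.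
    move=> yS; apply/idP/idP => yD.
      by move: yS; rewrite (subsetP (validS h1) _ yD).
    by move: yS; rewrite (subsetP (validS h2) _ yD).
  move=> D /andP [/andP [hD uD] nbad].
  case: (Bfacts D hD uD) => vD pD cp.
  apply/andP; split.
    apply: validE; first exact: subsetIr.
    - move=> x xS2; move: (xS2); rewrite inS2 => /and4P [xp xu xv xS].
      rewrite in_setI xS2 andbT => xD.
      by rewrite NS2I ?vfar // (validO hD).
    - move=> x; rewrite in_setI => /andP [xD xS2]; move: (xS2); rewrite inS2 => /and4P [xp xu xv xS].
      move=> h1.
      case: (boolP (p \in NS S x)) => pNx.
        have xNp : x \in NS S p := Nsym xS pNx.
        have : ~~ [&& x \in NS S p, x \in D, #|NS S2 x| == 1 & NS S2 x :&: D != set0].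
          by move: nbad; rewrite negb_exists => /forallP /(_ x).
        rewrite xNp xD h1 eqxx /= negbK => /eqP h2.
        apply/eqP; rewrite -subset0 -h2; apply: setIS; exact: subsetIl.
      have eqN : NS S2 x = NS S x.
        by rewrite NS2 (setD1_id (vfar x xS xu)) (setD1_id (ufar x xS xv xp)) (setD1_id pNx).
      move: h1; rewrite eqN => h1; apply/eqP; rewrite -subset0 -(validI hD xD h1).
      apply: setIS; exact: subsetIl.
  move/eqP/cards1P: cp => [q hq].
  have qN : q \in NS S p by move: (set11 q); rewrite -hq in_setI => /andP [].
  have qD : q \in D by move: (set11 q); rewrite -hq in_setI => /andP [].
  apply/set0Pn; exists q; by rewrite !in_setI qN qD (qS2 D q).
+
  apply: (inj_le (g := fun D => (D :&: S2) :\: NS S p)).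
    move=> D /andP [/andP [hD uD] hbad].
    case: (Bfacts D hD uD) => vD pD cp.
    case/existsP: hbad => q /and4P [qN qD /eqP nq2 /set0Pn [r]].
    rewrite in_setI => /andP [rN rD].
    have NpD : NS S p :&: D = [set q] by apply: card1_eq => //; rewrite in_setI qN qD.
    have inNpD : forall y, y \in NS S p -> (y \in D) = (y == q).
      by move=> y yN; move: NpD => /setP /(_ y); rewrite in_setI yN in_set1 /= => ->.
    have qS2' : q \in S2 by apply: (qS2 D).
    have qS : q \in S by move: qS2'; rewrite inS2 => /and4P [].
    have Nq2 : NS S2 q = [set r] by apply: card1_eq.
    have rS2 : r \in S2 by move: rN; rewrite inN => /andP [].
    have eqr : e q r by move: rN; rewrite inN => /andP [].
    have rS : r \in S by move: rS2; rewrite inS2 => /and4P [].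
    have rNp : r \notin NS S p.
      apply/negP => rNp; have h := inNpD r rNp; rewrite rD in h; have rq : r = q by apply/eqP; rewrite -h.
      by move: eqr; rewrite rq eirr.
    have qNx : forall x, x \in S2 -> x \notin D -> q \notin NS S x.
      move=> x xS2 xD; apply/negP => qNx.
      have xS : x \in S by move: xS2; rewrite inS2 => /and4P [].
      have : x \in NS S2 q by rewrite inN xS2; move: qNx; rewrite inN => /andP [_]; rewrite esy.
      by rewrite Nq2 in_set1 => /eqP xr; move: xD; rewrite xr rD.
    apply/andP; split; last first.
      rewrite negbK; apply/eqP/setP => y; rewrite !inE.
      by case: (y \in S); case: (e p y); rewrite /= ?andbF.
    apply: validE.
    - by apply/subsetP => y; rewrite !inE => /andP [_ /andP [_ ->]].
    - move=> x xS2; move: (xS2); rewrite inS2 => /and4P [xp xu xv xS].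
      case: (eqVneq x q) => [->|xq] xE.
        by rewrite Nq2 card1I in_setD rNp in_setI rD rS2.
      have xD : x \notin D.
        apply/negP => xD; move: xE; rewrite in_setD in_setI xD xS2 !andbT negbK => xNp.
        by have := inNpD x xNp; rewrite xD (negbTE xq).
      rewrite -(validO hD xS xD) -(NS2I xS (vfar x xS xu) uD pD).
      apply: eq_card => y; rewrite !(in_setI, in_setD).
      case: (boolP (y \in NS S p)) => yNp /=; last by [].
      rewrite andbF; apply/esym.
      case: (boolP (y \in D)) => yD /=; last by rewrite !andbF.
      have yq : y = q by apply/eqP; rewrite -(inNpD y yNp).
      rewrite yq; apply/negbTE; apply/negP => /andP [qN2 _].
      move: (qNx x xS2 xD); rewrite NS2 in qN2.
      by move: qN2; rewrite !in_setD1 => /andP [_ /andP [_ /andP [_ ->]]].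
    - move=> x; rewrite in_setD in_setI => /and3P [xNp xD xS2].
      move: (xS2); rewrite inS2 => /and4P [xp xu xv xS].
      have pNx : p \notin NS S x.
        by apply/negP => h; move: xNp; rewrite (Nsym xS h).
      have eqN : NS S2 x = NS S x.
        by rewrite NS2 (setD1_id (vfar x xS xu)) (setD1_id (ufar x xS xv xp)) (setD1_id pNx).
      rewrite eqN => h1; apply/eqP; rewrite -subset0 -(validI hD xD h1); apply: setIS.
      by apply/subsetP => y; rewrite !(in_setD, in_setI) => /and3P [_ ->].
  have getq : forall D, valid S D -> u \notin D -> bad D ->
      exists q, [/\ q \in NS S p, NS S p :&: D = [set q] & 1 < #|NS S q|].
    move=> D hD uD hbad; case: (Bfacts D hD uD) => vD pD cp.
    case/existsP: hbad => q /and4P [qN qD /eqP nq2 /set0Pn [r]].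
    rewrite in_setI => /andP [rN rD].
    exists q; split => //; first by apply: card1_eq => //; rewrite in_setI qN qD.
    have rS2 : r \in S2 by move: rN; rewrite inN => /andP [].
    have eqr : e q r by move: rN; rewrite inN => /andP [].
    have rS : r \in S by move: rS2; rewrite inS2 => /and4P [].
    have rp : r != p by move: rS2; rewrite inS2 => /and4P [].
    apply: (two_lt (a := p) (b := r)); first exact: Nsym pS qN.
      by rewrite inN rS eqr.
    by rewrite eq_sym.
  move=> D1 D2 /andP [/andP [h1 u1] b1] /andP [/andP [h2 u2] b2] eqE.
  case: (Bfacts D1 h1 u1) => v1 p1 _; case: (Bfacts D2 h2 u2) => v2 p2 _.
  case: (getq D1 h1 u1 b1) => q1 [q1N NpD1 nq1].
  case: (getq D2 h2 u2 b2) => q2 [q2N NpD2 nq2].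
  have q1u : q1 != u.
    apply/negP => /eqP q1u; move: (set11 q1); rewrite -NpD1 in_setI q1u (negbTE u1).
    by rewrite andbF.
  have q2u : q2 != u.
    apply/negP => /eqP q2u; move: (set11 q2); rewrite -NpD2 in_setI q2u (negbTE u2).
    by rewrite andbF.
  have q12 : q1 = q2 by apply: hdeg.
  apply/setP => y; case: (boolP (y \in NS S p)) => yNp.
    move: NpD1 NpD2 => /setP /(_ y) e1 /setP /(_ y) e2.
    move: e1 e2; rewrite !in_setI yNp /= q12 => -> ->; done.
  case: (boolP (y \in S2)) => yS2.
    by move: eqE => /setP /(_ y); rewrite !in_setD !in_setI yS2 yNp /= !andbT.
  move: yS2; rewrite inS2; case: (eqVneq y p) => [->|yp] /=; first by rewrite (negbTE p1) (negbTE p2).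
  case: (eqVneq y u) => [->|yu] /=; first by rewrite (negbTE u1) (negbTE u2).
  case: (eqVneq y v) => [->|yv] /=; first by rewrite v1 v2.
  move=> yS; apply/idP/idP => yD.
    by move: yS; rewrite (subsetP (validS h1) _ yD).
  by move: yS; rewrite (subsetP (validS h2) _ yD).
have e0 := card_split (fun D => valid S D) (fun D => u \in D).
cbv beta in e0; rewrite /fcount e0; exact: leq_add hA hB.
Qed.

End Count.

Section Char.
Variables (T : finType) (e : rel T).
Hypotheses (esy : symmetric e) (eirr : irreflexive e).
Implicit Types (D : {set T}) (x y v w : T).
Local Notation NT := (nbr e setT).

Lemma pd_set D v : [set u in D | e v u] = NT v :&: D.
Proof. by apply/setP => y; rewrite !inE andbC. Qed.

Lemma pdE D : perfect_dom e D = [forall v, (v \notin D) ==> (#|NT v :&: D| == 1)].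
Proof. by apply: eq_forallb => v; rewrite pd_set. Qed.

Lemma xNT x : x \notin NT x.
Proof. by rewrite inN eirr andbF. Qed.

Lemma pd_minus D x : perfect_dom e D -> x \in D ->
  perfect_dom e (D :\ x) = (#|NT x| == 1) && (NT x :&: D != set0).
Proof.
rewrite !pdE => /forallP hD xD; apply/idP/idP.
  move/forallP => h.
  have hx : #|NT x :&: (D :\ x)| = 1 by apply/eqP; move: (implyP (h x)); rewrite setD11; apply.
  rewrite setID1 ?xNT // in hx.
  have sub : NT x \subset D.
    apply/subsetP => w wN; apply/negPn/negP => wD.
    have wx : w != x by apply/negP => /eqP wx; move: wD; rewrite wx xD.
    have h1 : #|NT w :&: D| = 1 by apply/eqP; apply: (implyP (hD w)).
    have xw : x \in NT w :&: D by rewrite in_setI xD inN in_setT esy; move: wN; rewrite inN => /andP [_ ->].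
    have h2 : #|NT w :&: (D :\ x)| = 1.
      by apply/eqP; apply: (implyP (h w)); rewrite in_setD1 negb_and wD orbT.
    have Hw := card1_eq xw h1.
    have : NT w :&: (D :\ x) = set0.
      have -> : NT w :&: (D :\ x) = (NT w :&: D) :\ x.
        by apply/setP => y; rewrite !inE; case: (y == x); case: (y \in D); rewrite /= ?andbF.
      by rewrite Hw setDv.
    by move=> h3; move: h2; rewrite h3 cards0.
  rewrite (setIidPl sub) in hx; rewrite hx eqxx /=.
  by rewrite -card_gt0 (setIidPl sub) hx.
case/andP => /eqP n1 /set0Pn [y]; rewrite in_setI => /andP [yN yD].
have Ny := card1_eq yN n1.
apply/forallP => v; apply/implyP; rewrite in_setD1 negb_and negbK.
case: (eqVneq v x) => [->|vx] /= vD.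
  rewrite Ny card1I in_setD1 yD andbT.
  have yx : y != x by move: yN; rewrite inN => /andP [_ exy]; rewrite eq_sym (neq_of_e eirr exy).
  by rewrite yx.
rewrite setID1; first exact: (implyP (hD v) vD).
apply/negP => xNv.
have : v \in NT x by rewrite inN in_setT esy; move: xNv; rewrite inN => /andP [_ ->].
by rewrite Ny in_set1 => /eqP vy; move: vD; rewrite vy yD.
Qed.

Lemma one_min_valid D : one_minimal_pds e D = valid e setT D.
Proof.
rewrite /one_minimal_pds /valid subsetT /=.
case: (boolP (perfect_dom e D)) => hD /=.
  have hD' := hD; rewrite pdE in hD'.
  apply/idP/idP.
    move/forall_inP => h; apply/forall_inP => x _.
    case: (boolP (x \in D)) => xD.
      move: (h x xD); rewrite pd_minus // negb_and.
      by case/orP => [/negbTE -> // | ]; rewrite negbK => ->; rewrite implybT.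
    by apply: (implyP (forallP hD' x)).
  move/forall_inP => h; apply/forall_inP => x xD.
  move: (h x (in_setT x)); rewrite xD pd_minus // negb_and negbK.
  by case: (#|NT x| == 1) => //=.
apply/esym/negbTE; apply: contra hD => /forall_inP h.
rewrite pdE; apply/forallP => v; apply/implyP => vD.
by move: (h v (in_setT v)); rewrite (negbTE vD).
Qed.

Lemma num_f : num_1min_pds e = fcount e setT.
Proof. by apply: eq_card => D; rewrite !inE one_min_valid. Qed.

End Char.

Section Step.
Variables (T : finType) (e : rel T).
Hypotheses (esy : symmetric e) (eirr : irreflexive e).
Variable bags : seq {set T}.
Hypothesis pd : path_decomposition e bags.
Hypothesis small : all (fun X : {set T} => #|X| <= 2) bags.
Local Notation NS := (nbr e).

Lemma cardD1' (S : {set T}) v : v \in S -> #|S :\ v| + 1 = #|S|.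
Proof. by move=> vS; rewrite (cardsD1 v S) vS addnC. Qed.

Lemma step (S : {set T}) : S != set0 ->
  (exists S' : {set T}, #|S'| < #|S| /\ fcount e S <= fcount e S') \/
  (exists S' : {set T}, #|S'| + 2 = #|S| /\ fcount e S <= 2 * fcount e S') \/
  (exists S' S'' : {set T}, #|S'| + 1 = #|S| /\ #|S''| + 3 = #|S| /\ fcount e S <= fcount e S' + fcount e S'').
Proof.
move=> S0.
case: (structure eirr pd small S0) => v vS [Nv0 | [u [Nv hu]]].
  left; exists (S :\ v); split; last exact: case0.
  by rewrite -(cardD1' vS) addn1.
have uN : u \in NS S v by rewrite Nv set11.
have uS : u \in S by move: uN; rewrite inN => /andP [->].
have vNu : v \in NS S u := Nsym esy vS uN.
have uv : u != v by move: uN; rewrite inN => /andP [_ evu]; rewrite eq_sym (neq_of_e eirr evu).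
case: (boolP [exists w in NS S u, (w != v) && (#|NS S w| == 1)]).
  case/exists_inP => w wN /andP [wv /eqP w1].
  left; exists (S :\ v); split; last exact: (case1a esy vS Nv wN wv w1).
  by rewrite -(cardD1' vS) addn1.
move/exists_inPn => nl.
have nonleaf : forall w, w \in NS S u -> w != v -> 1 < #|NS S w|.
  move=> w wN wv; have := nl w wN; rewrite wv /= => n1.
  have : 0 < #|NS S w|.
    rewrite card_gt0; apply/set0Pn; exists u; apply: (Nsym esy uS wN).
  by rewrite leq_eqVlt eq_sym (negbTE n1).
case: (boolP [exists p in NS S u, p != v]).
  case/exists_inP => p pN pv.
  have Nu : NS S u = [set v; p].
    apply/setP => y; rewrite in_set2; apply/idP/idP.
      move=> yN; case: (eqVneq y v) => [-> //|yv] /=.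
      by rewrite (hu y p yN pN (nonleaf y yN yv) (nonleaf p pN pv)) eqxx.
    by case/orP => /eqP ->.
  have np := nonleaf p pN pv.
  have pS : p \in S by move: pN; rewrite inN => /andP [->].
  have uNp : u \in NS S p := Nsym esy uS pN.
  have nu : 1 < #|NS S u| by apply: (two_lt vNu pN); rewrite eq_sym.
  have hdeg : forall q1 q2, q1 \in NS S p -> q2 \in NS S p -> q1 != u -> q2 != u ->
     1 < #|NS S q1| -> 1 < #|NS S q2| -> q1 = q2.
    move=> q1 q2 h1 h2 u1 u2 n1 n2; apply/eqP/negPn/negP => q12.
    apply: (deg2 eirr pd small uNp h1 h2 nu n1 n2) => //; by rewrite eq_sym.
  right; right; exists (S :\ v); exists (S :\ v :\ u :\ p); split.
    exact: cardD1'.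
  split; last exact: (case1bii esy eirr vS Nv Nu pv np hdeg).
  have pu : p != u by move: pN; rewrite inN => /andP [_ eup]; rewrite eq_sym (neq_of_e eirr eup).
  rewrite -(cardD1' vS) -(@cardD1' (S :\ v) u); last by rewrite in_setD1 uv uS.
  rewrite -(@cardD1' (S :\ v :\ u) p); last by rewrite !in_setD1 pu pv pS.
  by rewrite -!addnA.
move/exists_inPn => np.
have Nu : NS S u = [set v].
  apply/setP => y; rewrite in_set1; apply/idP/idP; last by move/eqP ->.
  by move=> yN; move: (np y yN); rewrite negbK.
right; left; exists (S :\ v :\ u); split; last exact: (caseK2 esy vS Nv Nu).
rewrite -(cardD1' vS) -(@cardD1' (S :\ v) u) ?in_setD1 ?uv ?uS //.
by rewrite -addnA.
Qed.

End Step.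


Lemma setU1_in (X : finType) (u : X) (E : {set X}) : u \in E -> u |: E = E.
Proof. by move=> h; apply/setUidPr; rewrite sub1set. Qed.
Lemma setIU1 (X : finType) (u : X) (A E : {set X}) : u \notin A -> A :&: (u |: E) = A :&: E.
Proof.
move=> h; apply/setP => y; rewrite !inE; case: (eqVneq y u) => [->|] /=; last by [].
by rewrite (negbTE h).
Qed.

Section Lower.
Variables (T : finType) (e : rel T).
Hypotheses (esy : symmetric e) (eirr : irreflexive e).
Implicit Types (S D E : {set T}) (v u w x y p q r : T).
Local Notation NS := (nbr e).
Local Notation valid := (valid e).
Local Notation fcount := (fcount e).

Lemma psi1 S v u p :
  v \in S -> NS S v = [set u] -> NS S u = [set v; p] -> p != v -> #|NS S p| != 1 ->
  fcount (S :\ v) <= #|[set D | valid S D && ~~ (v \in D)]|.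
Proof.
move=> vS Nv Nu pv np.
have uN : u \in NS S v by rewrite Nv set11.
have uS : u \in S by move: uN; rewrite inN => /andP [->].
have evu : e v u by move: uN; rewrite inN => /andP [_ ->].
have pN : p \in NS S u by rewrite Nu !inE eqxx orbT.
have pS : p \in S by move: pN; rewrite inN => /andP [->].
have eup : e u p by move: pN; rewrite inN => /andP [_ ->].
have uv : u != v by rewrite eq_sym; apply: (neq_of_e eirr).
have pu : p != u by rewrite eq_sym; apply: (neq_of_e eirr).
have vfar : forall x, x \in S -> x != u -> v \notin NS S x.
  by move=> x xS xu; apply: (notin_N esy xS Nv xu).
have ufar : forall x, x \in S -> x != v -> x != p -> u \notin NS S x.
  move=> x xS xv xp; apply/negP => /(Nsym esy xS); rewrite Nu !inE.
  by rewrite (negbTE xv) (negbTE xp).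
have nu2 : #|NS S u| = 2 by rewrite Nu cards2 eq_sym pv.
have Nu' : NS (S :\ v) u = [set p].
  apply/setP => y; rewrite NsD in_setD1 Nu !inE; case: (eqVneq y v) => [->|] //=.
  by rewrite eq_sym (negbTE pv).
have uS' : u \in S :\ v by rewrite in_setD1 uv uS.
rewrite /fcount.
have key : forall E, valid (S :\ v) E -> (u \in E) = (p \notin E).
  move=> E hE; case: (boolP (u \in E)) => uE.
    have h1 : #|NS (S :\ v) u| = 1 by rewrite Nu' cards1.
    move: (validI hE uE h1); rewrite Nu' => /setP /(_ p); rewrite !inE eqxx /=.
    by move=> ->.
  move: (validO hE uS' uE); rewrite Nu' card1I.
  by case: (p \in E).
apply: (inj_le (g := fun E => u |: E)); last first.
  move=> E1 E2 h1 h2 eqE; apply/setP => y.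
  case: (eqVneq y u) => [->|yu].
    rewrite (key E1 h1) (key E2 h2); move: eqE => /setP /(_ p).
    by rewrite !in_setU1 (negbTE pu) /= => ->.
  by move: eqE => /setP /(_ y); rewrite !in_setU1 (negbTE yu).
move=> E hE; have sE := validS hE.
have vE : v \notin E by apply/negP => /(subsetP sE); rewrite in_setD1 eqxx.
have ES : forall x, x \in E -> x \in S.
  by move=> x /(subsetP sE); rewrite in_setD1 => /andP [].
apply/andP; split; last by rewrite in_setU1 negb_or eq_sym uv vE.
apply: validE.
+ apply/subsetP => x; rewrite in_setU1 => /orP [/eqP -> // | ]; exact: ES.
+ move=> x xS; rewrite in_setU1 negb_or => /andP [xu xE].
  case: (eqVneq x v) => [->|xv]; first by rewrite Nv card1I in_setU1 eqxx.
  have xS' : x \in S :\ v by rewrite in_setD1 xv xS.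
  case: (eqVneq x p) => [xp|xp].
    have uE : u \in E by rewrite (key E hE) -xp.
    rewrite (setU1_in uE) -(setD1I _ vE) -NsD; exact: validO hE xS' xE.
  rewrite setIU1 ?(ufar x xS xv xp) // -(setD1I _ vE) -NsD; exact: validO hE xS' xE.
+ move=> x; rewrite in_setU1 => /orP [/eqP -> | xE] h1; first by move: h1; rewrite nu2.
  have xS := ES x xE.
  have xv : x != v by apply/negP => /eqP xv; move: xE; rewrite xv (negbTE vE).
  case: (eqVneq x u) => [xu|xu]; first by move: h1; rewrite xu nu2.
  case: (eqVneq x p) => [xp|xp]; first by move: np; rewrite -xp h1.
  have eqN : NS S x = NS (S :\ v) x by rewrite NsD (setD1_id (vfar x xS xu)).
  rewrite setIU1 ?(ufar x xS xv xp) // eqN; apply: validI hE xE _; by rewrite -eqN.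
Qed.

Lemma lower1 S v u p :
  v \in S -> NS S v = [set u] -> NS S u = [set v; p] -> p != v -> #|NS S p| != 1 ->
  fcount (S :\ v) <= fcount S.
Proof.
move=> vS Nv Nu pv np; apply: leq_trans (psi1 vS Nv Nu pv np) _.
by apply: subset_leq_card; apply/subsetP => D; rewrite !inE => /andP [->].
Qed.

Lemma lower_rec S v u p q r :
  v \in S -> NS S v = [set u] -> NS S u = [set v; p] -> NS S p = [set u; q] ->
  q != u ->
  NS (S :\ v :\ u :\ p) q = [set r] -> 1 < #|NS (S :\ v :\ u :\ p) r| ->
  fcount (S :\ v) + fcount (S :\ v :\ u :\ p) <= fcount S.
Proof.
move=> vS Nv Nu Np qu Nq nr.
set S2 := S :\ v :\ u :\ p.
have uN : u \in NS S v by rewrite Nv set11.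
have uS : u \in S by move: uN; rewrite inN => /andP [->].
have evu : e v u by move: uN; rewrite inN => /andP [_ ->].
have pN : p \in NS S u by rewrite Nu !inE eqxx orbT.
have pS : p \in S by move: pN; rewrite inN => /andP [->].
have eup : e u p by move: pN; rewrite inN => /andP [_ ->].
have qN : q \in NS S p by rewrite Np !inE eqxx orbT.
have qS : q \in S by move: qN; rewrite inN => /andP [->].
have epq : e p q by move: qN; rewrite inN => /andP [_ ->].
have uv : u != v by rewrite eq_sym; apply: (neq_of_e eirr).
have pu : p != u by rewrite eq_sym; apply: (neq_of_e eirr).
have qp : q != p by rewrite eq_sym; apply: (neq_of_e eirr).
have pv : p != v.
  apply/negP => /eqP pv; have : q \in NS S v by rewrite -pv.
  by rewrite Nv in_set1 (negbTE qu).
have qv : q != v.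
  apply/negP => /eqP qv; have : p \in NS S v by rewrite -qv (Nsym esy pS qN).
  by rewrite Nv in_set1 (negbTE pu).
have inS2 : forall x, x \in S2 = [&& x != p, x != u, x != v & x \in S].
  by move=> x; rewrite !inE.
have NS2 : forall x, NS S2 x = NS S x :\ v :\ u :\ p by move=> x; rewrite !NsD.
have rN : r \in NS S2 q by rewrite Nq set11.
have rS2 : r \in S2 by move: rN; rewrite inN => /andP [->].
have eqr : e q r by move: rN; rewrite inN => /andP [_ ->].
have rS : r \in S by move: rS2; rewrite inS2 => /and4P [].
have rp : r != p by move: rS2; rewrite inS2 => /and4P [].
have qS2 : q \in S2 by rewrite inS2 qp qu qv qS.
have vfar : forall x, x \in S -> x != u -> v \notin NS S x.
  by move=> x xS xu; apply: (notin_N esy xS Nv xu).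
have ufar : forall x, x \in S -> x != v -> x != p -> u \notin NS S x.
  move=> x xS xv xp; apply/negP => /(Nsym esy xS); rewrite Nu !inE.
  by rewrite (negbTE xv) (negbTE xp).
have pfar : forall x, x \in S -> x != u -> x != q -> p \notin NS S x.
  move=> x xS xu xq; apply/negP => /(Nsym esy xS); rewrite Np !inE.
  by rewrite (negbTE xu) (negbTE xq).
have near2 : forall x, x \in S2 -> x != q -> NS S x = NS S2 x.
  move=> x; rewrite inS2 => /and4P [xp xu xv xS] xq.
  by rewrite NS2 (setD1_id (vfar x xS xu)) (setD1_id (ufar x xS xv xp)) (setD1_id (pfar x xS xu xq)).
have nu2 : #|NS S u| = 2 by rewrite Nu cards2 eq_sym pv.
have np2 : #|NS S p| = 2 by rewrite Np cards2 eq_sym qu.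
have nq2 : 1 < #|NS S q|.
  apply: (two_lt (a := p) (b := r)); first exact: (Nsym esy pS qN).
    by rewrite inN rS eqr.
  by rewrite eq_sym.
have Nu' : NS (S :\ v) u = [set p].
  apply/setP => y; rewrite NsD in_setD1 Nu !inE; case: (eqVneq y v) => [->|] //=.
  by rewrite eq_sym (negbTE pv).
have uS' : u \in S :\ v by rewrite in_setD1 uv uS.
have e0 := card_split (fun D => valid S D) (fun D => v \in D).
cbv beta in e0; rewrite /fcount e0 [X in _ <= X]addnC leq_add //.
- by apply: (psi1 vS Nv Nu pv); rewrite np2.
-
  have key2 : forall E, valid S2 E -> (q \in E) = (r \notin E).
    move=> E hE; case: (boolP (q \in E)) => qE.
      have h1 : #|NS S2 q| = 1 by rewrite Nq cards1.
      move: (validI hE qE h1); rewrite Nq => /setP /(_ r); rewrite !inE eqxx /=.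
      by move=> ->.
    move: (validO hE qS2 qE); rewrite Nq card1I.
    by case: (r \in E).
  have rq : r != q by rewrite eq_sym; apply: (neq_of_e eirr).
  have rv : r != v by move: rS2; rewrite inS2 => /and4P [].
  apply: (inj_le (g := fun E => v |: (q |: E))); last first.
    move=> E1 E2 h1 h2 eqE; apply/setP => y.
    have nv : forall E, valid S2 E -> v \notin E.
      by move=> E hE; apply/negP => /(subsetP (validS hE)); rewrite inS2 eqxx /= !andbF.
    case: (eqVneq y q) => [->|yq].
      rewrite (key2 E1 h1) (key2 E2 h2); move: eqE => /setP /(_ r).
      by rewrite !in_setU1 (negbTE rq) (negbTE rv) /= => ->.
    case: (eqVneq y v) => [->|yv]; first by rewrite (negbTE (nv _ h1)) (negbTE (nv _ h2)).
    by move: eqE => /setP /(_ y); rewrite !in_setU1 (negbTE yq) (negbTE yv).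
  move=> E hE; have sE := validS hE.
  have ES2 : forall x, x \in E -> x \in S2 by move=> x /(subsetP sE).
  have ES : forall x, x \in E -> x \in S by move=> x /ES2; rewrite inS2 => /and4P [].
  have nE : forall x, x \in E -> [/\ x != p, x != u & x != v].
    by move=> x /ES2; rewrite inS2 => /and4P [].
  have uD : u \notin v |: (q |: E).
    rewrite !in_setU1 (negbTE uv) (eq_sym u q) (negbTE qu) /=; apply/negP => /nE [_]; by rewrite eqxx.
  have pD : p \notin v |: (q |: E).
    rewrite !in_setU1 (negbTE pv) (eq_sym p q) (negbTE qp) /=; apply/negP => /nE []; by rewrite eqxx.
  apply/andP; split; last by rewrite setU11.
  apply: validE.
  + apply/subsetP => x; rewrite !in_setU1 => /orP [/eqP -> // | /orP [/eqP -> // | ]]; exact: ES.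
  + move=> x xS xD.
    case: (eqVneq x u) => [->|xu].
      have -> : NS S u :&: (v |: (q |: E)) = [set v].
        apply/setP => y; rewrite in_setI Nu in_set2 in_set1.
        case: (eqVneq y v) => [->|yv] /=; first by rewrite setU11.
        case: (eqVneq y p) => [->|] //=; by rewrite (negbTE pD).
      by rewrite cards1.
    case: (eqVneq x p) => [->|xp].
      have -> : NS S p :&: (v |: (q |: E)) = [set q].
        apply/setP => y; rewrite in_setI Np in_set2 in_set1.
        case: (eqVneq y q) => [->|yq] /=; first by rewrite !in_setU1 eqxx /= !orbT.
        case: (eqVneq y u) => [->|] //=; by rewrite (negbTE uD).
      by rewrite cards1.
    move: xD; rewrite !in_setU1 !negb_or => /and3P [xv xq xE].
    have xS2 : x \in S2 by rewrite inS2 xp xu xv xS.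
    rewrite (near2 x xS2 xq) setIU1; last by rewrite inN inS2 eqxx /= !andbF.
    case: (boolP (q \in E)) => qE; first by rewrite (setU1_in qE); apply: validO hE xS2 xE.
    rewrite setIU1; first exact: validO hE xS2 xE.
    apply/negP => qNx; have : x \in NS S2 q by apply: (Nsym esy xS2 qNx).
    rewrite Nq in_set1 => /eqP xr.
    by move: xE; rewrite xr -(key2 E hE) (negbTE qE).
  + move=> x; rewrite !in_setU1 => /orP [/eqP -> h1 | /orP [/eqP -> h1 | xE h1]].
      by rewrite Nv set1I0.
      by move: nq2; rewrite h1.
    case: (nE x xE) => xp xu xv.
    have xS2 := ES2 x xE.
    case: (eqVneq x q) => [xq|xq].
      by move: nq2; rewrite -xq h1.
    move: h1; rewrite (near2 x xS2 xq) => h1.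
    rewrite setIU1; last by rewrite inN inS2 eqxx /= !andbF.
    rewrite setIU1; first exact: validI hE xE h1.
    apply/negP => qNx; have : x \in NS S2 q by apply: (Nsym esy xS2 qNx).
    rewrite Nq in_set1 => /eqP xr.
    by move: nr; rewrite -xr h1.
Qed.

End Lower.

Lemma psym k : symmetric (path_rel k).
Proof. by move=> x y; rewrite /path_rel orbC. Qed.

Lemma pirr k : irreflexive (path_rel k).
Proof. move=> x; rewrite /path_rel; lia. Qed.

Definition pbag k (j : nat) : {set 'I_k} := [set x : 'I_k | (j <= x) && (x <= j.+1)].

Lemma ppw k : pathwidth_le1 (path_rel k).
Proof.
exists [seq pbag k j | j <- iota 0 k].
have nthb : forall j, nth set0 [seq pbag k j | j <- iota 0 k] j = if j < k then pbag k j else set0.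
  move=> j; case: ifP => hj.
    by rewrite (nth_map 0) ?size_iota // nth_iota.
  by rewrite nth_default // size_map size_iota leqNgt hj.
split; last first.
  apply/allP => X /mapP [j _ ->].
  have := @leq_card_in _ _ (fun x : 'I_k => val x == j) (pbag k j).
  rewrite card_bool; apply.
  move=> x y; rewrite !inE => hx hy /= hxy; apply/val_inj => /=; move: hx hy hxy; lia.
split.
  move=> v; exists (pbag k v); first by apply/mapP; exists (nat_of_ord v); rewrite // mem_iota /=.
  by rewrite inE; lia.
split.
  move=> x y; rewrite /path_rel => hxy; exists (pbag k (minn x y)).
    by apply/mapP; exists (minn x y); rewrite // mem_iota /=; move: (ltn_ord x); lia.
  by rewrite !inE; move: hxy; lia.
move=> v i j l /andP [ij jl]; rewrite !nthb => hvi hvl.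
have hi : i < k by move: hvi; case: ifP => // _; rewrite in_set0.
have hl : l < k by move: hvl; case: ifP => // _; rewrite in_set0.
have hj : j < k by lia.
move: hvi hvl; rewrite hi hl hj !inE; lia.
Qed.

Section PathCount.
Variable n : nat.
Local Notation k := n.+1.
Local Notation e := (path_rel k).
Definition Sm (m : nat) : {set 'I_k} := [set x : 'I_k | x < m].
Local Notation o j := (@inord n j).

Lemma oK j : j <= n -> nat_of_ord (o j) = j.
Proof. by move=> h; apply: inordK. Qed.

Lemma inNp m (x y : 'I_k) : (y \in nbr e (Sm m) x) = (y < m) && ((x.+1 == y) || (y.+1 == x)).
Proof. by rewrite !inE. Qed.

Lemma eqo (y : 'I_k) j : j <= n -> (y == o j) = (nat_of_ord y == j).
Proof. by move=> h; rewrite -val_eqE /= oK. Qed.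

Lemma fS3 : 3 <= k -> 1 <= fcount e (Sm 3).
Proof.
move=> h3; rewrite /fcount; apply/card_gt0P; exists [set o 1]; rewrite inE.
apply: validE.
- by apply/subsetP => x; rewrite !inE eqo; lia.
- move=> x; rewrite !inE eqo; last lia.
  move=> hx hx1; rewrite setIC card1I.
  have -> : o 1 \in nbr e (Sm 3) x by rewrite inNp oK; lia.
  done.
- move=> x; rewrite in_set1 eqo; last lia.
  move=> hx.
  have h02 : 1 < #|nbr e (Sm 3) x|.
    apply: (two_lt (a := o 0) (b := o 2)).
    + rewrite inNp oK; lia.
    + rewrite inNp oK; lia.
    + rewrite eqo; [ rewrite oK; lia | lia].
  by move=> h1; move: h02; rewrite h1.
Qed.

Lemma Sm_D1 m : 1 <= m <= k -> Sm m :\ o (m - 1) = Sm (m - 1).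
Proof. move=> h; apply/setP => y; rewrite !inE eqo; lia. Qed.

Lemma step_low1 m : 4 <= m <= k -> fcount e (Sm (m - 1)) <= fcount e (Sm m).
Proof.
move=> h; rewrite -Sm_D1; last by lia.
apply: (lower1 (@psym k) (@pirr k) (u := o (m - 2)) (p := o (m - 3))).

- rewrite inE oK; lia.
- apply/setP => y; rewrite inNp in_set1 !eqo ?oK; lia.
- apply/setP => y; rewrite inNp in_set2 !eqo ?oK; lia.
- rewrite eqo ?oK; lia.
- have : 1 < #|nbr e (Sm m) (o (m - 3))|.
    apply: (two_lt (a := o (m - 2)) (b := o (m - 4))).
    + rewrite inNp !oK; lia.
    + rewrite inNp !oK; lia.
    + rewrite eqo ?oK; lia.
  by case: #|_| => [|[|]].
Qed.

Lemma step_rec m : 6 <= m <= k -> fcount e (Sm (m - 1)) + fcount e (Sm (m - 3)) <= fcount e (Sm m).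
Proof.
move=> h.
have E1 : Sm m :\ o (m - 1) = Sm (m - 1) by rewrite Sm_D1 //; lia.
have E2 : Sm m :\ o (m - 1) :\ o (m - 2) :\ o (m - 3) = Sm (m - 3).
  apply/setP => y; rewrite !inE !eqo; lia.
rewrite -{1}E1 -E2.
apply: (lower_rec (@psym k) (@pirr k) (u := o (m - 2)) (p := o (m - 3)) (q := o (m - 4)) (r := o (m - 5))).
- rewrite inE oK; lia.
- apply/setP => y; rewrite inNp in_set1 !eqo ?oK; lia.
- apply/setP => y; rewrite inNp in_set2 !eqo ?oK; lia.
- apply/setP => y; rewrite inNp in_set2 !eqo ?oK; lia.
- rewrite eqo ?oK; lia.
- rewrite E2; apply/setP => y; rewrite inNp in_set1 !eqo ?oK; lia.
- rewrite E2; apply: (two_lt (a := o (m - 6)) (b := o (m - 4))).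
  + rewrite inNp !oK; lia.
  + rewrite inNp !oK; lia.
  + rewrite eqo ?oK; lia.
Qed.

Lemma Sm_k : Sm k = setT.
Proof. by apply/setP => y; rewrite !inE ltn_ord. Qed.

End PathCount.

From mathcomp Require Import zify.
From Stdlib Require Import Reals Lra Lia.

Local Notation ff := fcount.
Lemma f_set0 (T : finType) (e : rel T) : ff e set0 <= 1.
Proof.
rewrite /fcount -(cards1 (@set0 T)); apply: subset_leq_card; apply/subsetP => D.
rewrite !inE => /andP [hD _]; by rewrite -subset0.
Qed.

Lemma real_bound (T : finType) (e : rel T) (esy : symmetric e) (eirr : irreflexive e)
  (bags : seq {set T}) (pd : path_decomposition e bags)
  (small : all (fun X : {set T} => #|X| <= 2) bags) (alpha : R) :
  (1 <= alpha)%R -> (alpha ^ 3 = alpha ^ 2 + 1)%R -> (2 <= alpha ^ 2)%R ->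
  forall S : {set T}, (INR (ff e S) <= alpha ^ #|S|)%R.
Proof.
move=> a1 a3 a2.
have powpos : forall k, (0 <= alpha ^ k)%R by move=> k; apply: pow_le; lra.
suff H : forall n (S : {set T}), #|S| <= n -> (INR (ff e S) <= alpha ^ #|S|)%R.
  by move=> S; apply: (H #|S|).
elim=> [|n IH] S hS.
  have S0 : S = set0 by apply/eqP; rewrite -cards_eq0 -leqn0.
  rewrite S0 cards0 /=; have := le_INR _ _ (elimT leP (f_set0 e)); simpl; lra.
case: (eqVneq S set0) => [S0|S0].
  rewrite S0 cards0 /=; have := le_INR _ _ (elimT leP (f_set0 e)); simpl; lra.
case: (step esy eirr pd small S0) => [[S' [h1 h2]] | [[S' [h1 h2]] | [S' [S'' [h1 [h2 h3]]]]]].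
- apply: Rle_trans (le_INR _ _ (elimT leP h2)) _.
  apply: Rle_trans (IH S' _) _; first by rewrite -ltnS; apply: leq_trans hS.
  apply: Rle_pow => //; apply/leP; exact: ltnW.
- apply: Rle_trans (le_INR _ _ (elimT leP h2)) _.
  rewrite -multE mult_INR -h1 -plusE pow_add.
  have hh : #|S'| <= n by move: hS; rewrite -h1; lia.
  have := IH S' hh => h.
  have -> : INR 2 = 2%R by simpl; lra.
  rewrite Rmult_comm; apply: Rmult_le_compat => //; first exact: pos_INR; lra.
- apply: Rle_trans (le_INR _ _ (elimT leP h3)) _.
  rewrite -plusE plus_INR -h2.
  have hh1 : #|S'| <= n by move: hS; rewrite -h1; lia.
  have i1 := IH S' hh1.
  have hh2 : #|S''| <= n by move: hS; rewrite -h2; lia.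
  have i2 := IH S'' hh2.
  have e1 : #|S'| = (#|S''| + 2)%coq_nat.
    move: h1 h2; lia.
  rewrite e1 pow_add in i1; rewrite -plusE !pow_add a3 Rmult_plus_distr_l Rmult_1_r; lra.
Qed.

Lemma alpha_sq (alpha : R) : (1 < alpha < 2)%R -> (alpha ^ 3 - alpha ^ 2 - 1 = 0)%R -> (2 <= alpha ^ 2)%R.
Proof. move=> [h1 h2] h3; simpl in *; nra. Qed.

Lemma path_lower (alpha : R) n : (1 <= alpha)%R -> (alpha ^ 3 = alpha ^ 2 + 1)%R ->
  forall m, 3 <= m <= n.+1 -> (alpha ^ m <= alpha ^ 5 * INR (fcount (path_rel n.+1) (Sm n m)))%R.
Proof.
move=> a1 a3.
have powpos : forall j, (0 <= alpha ^ j)%R by move=> j; apply: pow_le; lra.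
have powmono : forall i j, i <= j -> (alpha ^ i <= alpha ^ j)%R.
  by move=> i j /leP hij; apply: Rle_pow.
have ge1 : forall m, 3 <= m <= n.+1 -> (1 <= INR (fcount (path_rel n.+1) (Sm n m)))%R.
  move=> m; elim: m => [|m IH] hm; first by lia.
  case: (eqVneq m 2) => [m2|m2].
    rewrite m2; have := le_INR _ _ (elimT leP (fS3 (n:=n) (ltac:(lia)))); simpl; lra.
  have h := step_low1 (n:=n) (m := m.+1) (ltac:(lia)).
  rewrite subn1 /= in h.
  apply: Rle_trans (IH (ltac:(lia))) _; exact: le_INR (elimT leP h).
elim/ltn_ind => m IH hm.
case: (leqP m 5) => h5.
  apply: Rle_trans (powmono m 5 h5) _.
  have := ge1 m hm; have := powpos 5; nra.
have hr := step_rec (n:=n) (m:=m) (ltac:(lia)).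
have i1 := IH (m - 1) (ltac:(lia)) (ltac:(lia)).
have i2 := IH (m - 3) (ltac:(lia)) (ltac:(lia)).
have hr' := le_INR _ _ (elimT leP hr); rewrite -plusE plus_INR in hr'.
have em : m = ((m - 3) + 3)%coq_nat by lia.
have em1 : (m - 1) = ((m - 3) + 2)%coq_nat by lia.
rewrite {1}em1 pow_add in i1.
have -> : (alpha ^ m = alpha ^ (m - 3) * alpha ^ 2 + alpha ^ (m - 3))%R.
  by rewrite {1}em pow_add a3; ring.
have := Rmult_le_compat_l _ _ _ (powpos 5) hr'; lra.
Qed.

Theorem mainTheorem8 (alpha : R) :
  (1 < alpha < 2)%R -> (alpha ^ 3 - alpha ^ 2 - 1 = 0)%R ->
  (forall (T : finType) (e : rel T),
      symmetric e -> irreflexive e -> pathwidth_le1 e ->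
      (INR (num_1min_pds e) <= alpha ^ #|T|)%R) /\
  (exists c1 c2 : R, (0 < c1)%R /\ (0 < c2)%R /\
     exists N : nat, forall n : nat, (leq N n) ->
       (c1 * alpha ^ n <= INR (num_1min_pds (path_rel n)) <= c2 * alpha ^ n)%R).
Proof.
move=> ha h3.
have a1 : (1 <= alpha)%R by lra.
have a3 : (alpha ^ 3 = alpha ^ 2 + 1)%R by lra.
have a2 := alpha_sq ha h3.
have part1 : forall (T : finType) (e : rel T),
      symmetric e -> irreflexive e -> pathwidth_le1 e ->
      (INR (num_1min_pds e) <= alpha ^ #|T|)%R.
  move=> T e esy eirr [bags [pd small]].
  rewrite (num_f esy eirr) -cardsT.
  exact: (real_bound esy eirr pd small a1 a3 a2).
split => //.
have a5 : (0 < alpha ^ 5)%R by apply: pow_lt; lra.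
exists (/ alpha ^ 5)%R, 1%R; split; first exact: Rinv_0_lt_compat.
split; first lra.
exists 3 => n hn.
split; last first.
  rewrite Rmult_1_l; have := part1 _ _ (@psym n) (@pirr n) (@ppw n).
  by rewrite card_ord.
case: n hn => [|n] hn; first by lia.
rewrite (num_f (@psym n.+1) (@pirr n.+1)) -(@Sm_k n).
have := @path_lower alpha n a1 a3 n.+1 (ltac:(lia)).
move=> h; apply: (Rmult_le_reg_l (alpha ^ 5)) => //.
rewrite -Rmult_assoc Rinv_r; lra.
Qed.
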